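(* Let $(D, \{ \prec_\alpha, \succ_\alpha \}_{\alpha \in \Omega})$ be a dendriform family algebra and $\{ T_\alpha : M \to A \}_{\alpha \in \Omega}$ an $\mathcal{O}$-operator family. Then there is a bijection $$\mathrm{Hom}_{\mathbf{Ooperf}} \big( \{ \mathrm{Id}_\alpha : D \to (D \otimes \mathbf{k}\Omega)_{\mathrm{Tot}}\},\ \{ T_\alpha : M \to A\} \big) \cong \mathrm{Hom}_{\mathbf{Dendf}} (D, M_{ \{ T_\alpha \} }),$$ natural in both arguments; that is, the functor $\mathcal{G}:\mathbf{Dendf}\to\mathbf{Ooperf}$, $D\mapsto\{\mathrm{Id}_\alpha: D\to(D\otimes\mathbf{k}\Omega)_{\mathrm{Tot}}\}$, is left adjoint to the functor $\mathcal{F}:\mathbf{Ooperf}\to\mathbf{Dendf}$, $\{T_\alpha:M\to A\}\mapsto M_{\{T_\alpha\}}$.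
   Context: $\Omega$ is a semigroup. An $\mathcal{O}$-operator family is a collection of linear maps $T_\alpha:M\to A$ ($A$ associative algebra, $M$ an $A$-bimodule) with $T_\alpha(u) \cdot T_\beta(v) = T_{\alpha\beta}(T_\alpha(u) \cdot v + u \cdot T_\beta(v))$. $\mathbf{Ooperf}$ is the category of $\mathcal{O}$-operator families, where a morphism from $\{T_\alpha:M\to A\}$ to $\{T'_\alpha:M'\to A'\}$ is a pair $(\phi,\psi)$, $\phi:A\to A'$ an algebra homomorphism, $\psi:M\to M'$ linear, with $\psi(a\cdot u)=\phi(a)\cdot'\psi(u)$, $\psi(u\cdot a)=\psi(u)\cdot'\phi(a)$, $\phi\circ T_\alpha=T'_\alpha\circ\psi$. A dendriform family algebra is a vector space $D$ with bilinear maps $\{\prec_\alpha,\succ_\alpha\}_{\alpha\in\Omega}$ such that $(x \prec_\alpha y) \prec_\beta z = x \prec_{\alpha \beta} (y \prec_\beta z + y \succ_\alpha z)$, $(x \succ_\alpha y) \prec_\beta z = x \succ_\alpha (y \prec_\beta z)$, $(x \prec_\beta y + x \succ_\alpha y) \succ_{\alpha \beta} z = x \succ_\alpha (y \succ_\beta z)$; $\mathbf{Dendf}$ is their category with morphisms the linear maps preserving all $\prec_\alpha,\succ_\alpha$. $M_{\{T_\alpha\}}$ denotes $M$ with $u \prec_\alpha v=u \cdot T_\alpha(v)$, $u \succ_\alpha v = T_\alpha(u) \cdot v$ (a dendriform family algebra). $(D\otimes\mathbf{k}\Omega)_{\mathrm{Tot}}$ is the associative algebra $D\otimes\mathbf{k}\Omega$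 with $(x \otimes \alpha) \odot (y \otimes \beta)= (x \prec_{\beta} y + x \succ_{\alpha} y) \otimes \alpha \beta$; $D$ is a $(D\otimes\mathbf{k}\Omega)_{\mathrm{Tot}}$-bimodule via $(x \otimes \alpha) \cdot y= x \succ_{\alpha} y$, $y \cdot (x \otimes \alpha)= y \prec_{\alpha} x$; and $\mathrm{Id}_\alpha:D\to(D\otimes\mathbf{k}\Omega)_{\mathrm{Tot}}$, $\mathrm{Id}_\alpha(x)=x\otimes\alpha$, form an $\mathcal{O}$-operator family. *)

(* Defs.v *)
From HB Require Import structures.
From mathcomp Require Import all_boot all_algebra.
From mathcomp Require Import boolp classical_sets functions.

Set Implicit Arguments.
Unset Strict Implicit.
Unset Printing Implicit Defensive.

Import GRing.Theory.
Local Open Scope ring_scope.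

(* Semigroups: the index set Omega.  The carrier is a choiceType (every set  *)
(* is one, classically); this is only needed to have decidable equality on  *)
(* Omega, used to build k Omega.                                             *)
Record semigroup := Semigroup {
  sg_car :> choiceType;
  sg_op : sg_car -> sg_car -> sg_car;
  sg_assoc : associative sg_op
}.

Section Defs.
Variables (k : fieldType) (Om : semigroup).
Local Notation "a ** b" := (sg_op a b) (at level 40, left associativity).

Definition klinear (U V : lmodType k) (f : U -> V) :=
  forall (a : k) (u v : U), f (a *: u + v) = a *: f u + f v.

Definition kbilinear (U V W : lmodType k) (m : U -> V -> W) :=
  (forall v : V, klinear (fun u => m u v)) /\ (forall u : U, klinear (m u)).

Record dend_data := DendData {
  dcar : lmodType k;
  dprec : Om -> dcar -> dcar -> dcar;
  dsucc : Om -> dcar -> dcar -> dcar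
}.

Arguments dprec : clear implicits.
Arguments dsucc : clear implicits.

Definition is_dendf (D : dend_data) : Prop :=
  [/\ forall al, kbilinear (dprec D al),
      forall al, kbilinear (dsucc D al),
      (forall al be (x y z : dcar D),
         dprec D be (dprec D al x y) z
         = dprec D (al ** be) x (dprec D be y z + dsucc D al y z)),
      (forall al be (x y z : dcar D),
         dprec D be (dsucc D al x y) z = dsucc D al x (dprec D be y z)) &
      (forall al be (x y z : dcar D),
         dsucc D (al ** be) (dprec D be x y + dsucc D al x y) z
         = dsucc D al x (dsucc D be y z))].

Record dendf := Dendf { dend :> dend_data; dendP : is_dendf dend }.

Record dend_hom (D D' : dend_data) := DendHom {
  dh :> dcar D -> dcar D';
  dh_lin : klinear dh;
  dh_prec : forall al x y, dh (dprec D al x y) = dprec D' al (dh x) (dh y);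
  dh_succ : forall al x y, dh (dsucc D al x y) = dsucc D' al (dh x) (dh y)
}.

Record alg_data := AlgData {
  acar : lmodType k;
  amul : acar -> acar -> acar
}.

Record bimod_data (A : alg_data) := BimodData {
  mcar : lmodType k;
  lact : acar A -> mcar -> mcar;
  ract : mcar -> acar A -> mcar
}.

Arguments amul : clear implicits.
Arguments lact {A} b _ _.
Arguments ract {A} b _ _.

Record oop_data := OopData {
  oalg : alg_data;
  omod : bimod_data oalg;
  oT : Om -> mcar omod -> acar oalg
}.

Arguments oT : clear implicits.

Definition is_ooperf (O : oop_data) : Prop :=
  let A := oalg O in let M := omod O in
  [/\ kbilinear (amul A) /\ associative (amul A),
      kbilinear (lact M) /\ kbilinear (ract M),
      (forall (a b : acar A) (u : mcar M),
         lact M (amul A a b) u = lact M a (lact M b u)) /\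
      (forall (a b : acar A) (u : mcar M),
         ract M u (amul A a b) = ract M (ract M u a) b) /\
      (forall (a b : acar A) (u : mcar M),
         ract M (lact M a u) b = lact M a (ract M u b)),
      forall al, klinear (oT O al) &
      forall al be (u v : mcar M),
        amul A (oT O al u) (oT O be v)
        = oT O (al ** be) (lact M (oT O al u) v + ract M u (oT O be v))].

Record ooperf := Ooperf { oop :> oop_data; oopP : is_ooperf oop }.

Record oop_hom (O O' : oop_data) := OopHom {
  ophi : acar (oalg O) -> acar (oalg O');
  opsi : mcar (omod O) -> mcar (omod O');
  ophi_lin : klinear ophi;
  ophi_mul : forall a b, ophi (amul _ a b) = amul _ (ophi a) (ophi b);
  opsi_lin : klinear opsi;
  opsi_l : forall a u, opsi (lact _ a u) = lact _ (ophi a) (opsi u);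
  opsi_r : forall u a, opsi (ract _ u a) = ract _ (opsi u) (ophi a);
  ohom_T : forall al u, ophi (oT O al u) = oT O' al (opsi u)
}.

Definition Fobj (O : oop_data) : dend_data :=
  @DendData (mcar (omod O))
    (fun al u v => ract _ u (oT O al v))
    (fun al u v => lact _ (oT O al u) v).

(* D (x) k Omega: finitely supported functions Omega -> D.                  *)
(* x (x) alpha is the function supported at alpha with value x.             *)
Section Tensor.
Variable V : lmodType k.

Definition fsupp (f : Om -> V) : Prop :=
  exists s : seq Om, forall a, a \notin s -> f a = 0.

Definition is_fsupp : pred (Om -> V) := fun f => `[< fsupp f >].

Lemma is_fsupp_closed : subsemimod_closed is_fsupp.
Proof.
split; [split|].
- by apply/asboolP; exists [::] => a _.
- move=> f g /asboolP[s Hs] /asboolP[t Ht]; apply/asboolP; exists (s ++ t).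
  move=> a; rewrite mem_cat negb_or => /andP[/Hs Ha /Ht Hb] /=.
  by rewrite /+%R /= Ha Hb addr0.
- move=> c f /asboolP[s Hs]; apply/asboolP; exists s => a /Hs Ha.
  by rewrite /*:%R /= Ha scaler0.
Qed.

HB.instance Definition _ := GRing.isSubmodClosed.Build k (Om -> V) is_fsupp
  is_fsupp_closed.

Record tens := Tens { tval :> Om -> V; tvalP : is_fsupp tval }.
HB.instance Definition _ := [isSub for tval].
HB.instance Definition _ := [Choice of tens by <:].
HB.instance Definition _ := [SubChoice_isSubLmodule of tens by <:].

(* a chosen finite list covering the support *)
Definition tsupp (x : tens) : seq Om :=
  undup (projT1 (cid (asboolW (tvalP x)))).

Lemma single_fsupp (a : Om) (v : V) :
  is_fsupp (fun b => if b == a then v else 0).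
Proof.
apply/asboolP; exists [:: a] => b; rewrite inE => /negbTE ->; done.
Qed.

Definition tpure (v : V) (a : Om) : tens := Tens (single_fsupp a v).

End Tensor.

(* All operations are the bilinear extensions of the formulas on pure       *)
(* tensors x (x) alpha.                                                     *)
Section G.
Variable D : dend_data.

(* (x (x) al) . (y (x) be) = (x <_be y + x >_al y) (x) al be *)
Definition tot_mul (x y : tens (dcar D)) : tens (dcar D) :=
  \sum_(a <- tsupp x) \sum_(b <- tsupp y)
     tpure (dprec D b (x a) (y b) + dsucc D a (x a) (y b)) (a ** b).

Definition Tot : alg_data := @AlgData (tens (dcar D)) tot_mul.

(* (x (x) al) . y = x >_al y ;  y . (x (x) al) = y <_al x *)
Definition tot_lact (x : tens (dcar D)) (y : dcar D) : dcar D :=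
  \sum_(a <- tsupp x) dsucc D a (x a) y.
Definition tot_ract (y : dcar D) (x : tens (dcar D)) : dcar D :=
  \sum_(a <- tsupp x) dprec D a y (x a).

Definition Tot_bimod : bimod_data Tot :=
  @BimodData Tot (dcar D) tot_lact tot_ract.

Definition Gobj : oop_data :=
  @OopData Tot Tot_bimod (fun al x => tpure x al).

End G.

End Defs.

(* Main.v *)
Require Import Defs.
From HB Require Import structures.
From mathcomp Require Import all_boot all_algebra.
From mathcomp Require Import boolp classical_sets functions.
Set Implicit Arguments.
Unset Strict Implicit.
Import GRing.Theory.
Local Open Scope ring_scope.

Section Helpers.
Variables (k : fieldType) (Om : semigroup).

Lemma klinD (U V : lmodType k) (f : U -> V) : klinear f ->
  forall u v, f (u + v) = f u + f v.
Proof. by move=> hf u v; rewrite -[u in LHS]scale1r hf scale1r. Qed.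

Lemma klin0 (U V : lmodType k) (f : U -> V) : klinear f -> f 0 = 0.
Proof. move=> hf; have H := klinD hf 0 0; rewrite addr0 in H.
by apply/esym/(addrI (f 0)); rewrite addr0. Qed.

Lemma klinZ (U V : lmodType k) (f : U -> V) : klinear f ->
  forall a u, f (a *: u) = a *: f u.
Proof. by move=> hf a u; rewrite -[_ *: u]addr0 hf klin0 // addr0. Qed.

Lemma klin_sum (U V : lmodType k) (f : U -> V) (I : Type) (s : seq I) (F : I -> U) :
  klinear f -> f (\sum_(i <- s) F i) = \sum_(i <- s) f (F i).
Proof.
move=> hf; elim: s => [|i s IH]; first by rewrite !big_nil klin0.
by rewrite !big_cons klinD // IH.
Qed.

Lemma sum_sub (W : nmodType) (r s : seq Om) (G : Om -> W) :
  uniq r -> uniq s -> {subset s <= r} -> (forall a, a \notin s -> G a = 0) ->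
  \sum_(a <- r) G a = \sum_(a <- s) G a.
Proof.
move=> ur us sr G0; rewrite (bigID (fun a => a \in s)) /=.
rewrite [X in _ + X]big1 ?addr0; last by move=> a /G0.
rewrite -big_filter; apply: perm_big; apply: uniq_perm.
- exact: filter_uniq.
- exact: us.
by move=> a; rewrite mem_filter; case: (boolP (a \in s)) => // /sr ->.
Qed.

Lemma tsupp_uniq (V : lmodType k) (x : tens Om V) : uniq (tsupp x).
Proof. exact: undup_uniq. Qed.

Lemma tsupp_cover (V : lmodType k) (x : tens Om V) a : a \notin tsupp x -> x a = 0.
Proof.
rewrite /tsupp mem_undup; case: (cid _) => s /= Hs; exact: Hs.
Qed.

Lemma tsupp_sum (V : lmodType k) (W : nmodType) (x : tens Om V) (G : Om -> W) (s : seq Om) :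
  uniq s -> (forall a, x a = 0 -> G a = 0) -> (forall a, a \notin s -> x a = 0) ->
  \sum_(a <- tsupp x) G a = \sum_(a <- s) G a.
Proof.
move=> us hG hs.
have u3 : uniq (undup (tsupp x ++ s)) by exact: undup_uniq.
rewrite -(@sum_sub _ (undup (tsupp x ++ s))) //; last 2 first.
- by move=> a ha; rewrite mem_undup mem_cat ha.
- by move=> a /tsupp_cover /hG.
rewrite (@sum_sub _ (undup (tsupp x ++ s)) s) //.
- by move=> a ha; rewrite mem_undup mem_cat ha orbT.
- by move=> a /hs /hG.
exact: tsupp_uniq.
Qed.

Lemma tpureE (V : lmodType k) (v : V) (al b : Om) : tpure v al b = if b == al then v else 0.
Proof. by []. Qed.

Lemma tpure_cover (V : lmodType k) (v : V) (al a : Om) : a \notin [:: al] -> tpure v al a = 0.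
Proof. by rewrite inE tpureE => /negbTE ->. Qed.

Lemma tens_decomp (V : lmodType k) (x : tens Om V) :
  x = \sum_(a <- tsupp x) tpure (x a) a.
Proof.
apply: val_inj; apply: funext => b /=.
have -> : forall s : seq Om, val (\sum_(a <- s) tpure (x a) a) b
          = \sum_(a <- s) (if b == a then x a else 0).
  elim=> [|c s IH]; first by rewrite !big_nil.
  by rewrite !big_cons -IH.
rewrite -big_mkcond /=.
case: (boolP (b \in tsupp x)) => hb.
  rewrite (eq_bigl (fun a => a == b)); last by move=> a; rewrite eq_sym.
  by rewrite -big_filter filter_pred1_uniq ?tsupp_uniq // big_seq1.
rewrite big1_seq ?tsupp_cover //.
by move=> a /andP[/eqP <-]; rewrite (negbTE hb).
Qed.

End Helpers.
Section Main.
Variables (k : fieldType) (Om : semigroup).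
Local Notation "a ** b" := (sg_op a b) (at level 40, left associativity).

Lemma suml (U V W : lmodType k) (m : U -> V -> W) (I : Type) (s : seq I) F v :
  kbilinear m -> m (\sum_(i <- s) F i) v = \sum_(i <- s) m (F i) v.
Proof. by case=> H1 _; exact: (klin_sum s F (H1 v)). Qed.

Lemma sumr (U V W : lmodType k) (m : U -> V -> W) (I : Type) (s : seq I) F u :
  kbilinear m -> m u (\sum_(i <- s) F i) = \sum_(i <- s) m u (F i).
Proof. by case=> _ H2; exact: (klin_sum s F (H2 u)). Qed.

Lemma bil0r (U V W : lmodType k) (m : U -> V -> W) u : kbilinear m -> m u 0 = 0.
Proof. by case=> _ H2; exact: klin0 (H2 u). Qed.
Lemma bil0l (U V W : lmodType k) (m : U -> V -> W) v : kbilinear m -> m 0 v = 0.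
Proof. by case=> H1 _; exact: klin0 (H1 v). Qed.

Lemma tot_ract_pure (D : dendf k Om) (x y : dcar D) al :
  tot_ract x (tpure y al) = @dprec _ _ D al x y.
Proof.
case: (dendP D) => Hp Hs _ _ _.
rewrite /tot_ract (@tsupp_sum _ _ _ _ _ _ [:: al]) //.
- by rewrite big_seq1 tpureE eqxx.
- by move=> a ->; exact: bil0r.
- exact: tpure_cover.
Qed.

Lemma tot_lact_pure (D : dendf k Om) (x y : dcar D) al :
  tot_lact (tpure x al) y = @dsucc _ _ D al x y.
Proof.
case: (dendP D) => Hp Hs _ _ _.
rewrite /tot_lact (@tsupp_sum _ _ _ _ _ _ [:: al]) //.
- by rewrite big_seq1 tpureE eqxx.
- by move=> a ->; exact: bil0l.
- exact: tpure_cover.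
Qed.

Definition PhiF (D : dendf k Om) (O : ooperf k Om) (h : oop_hom (Gobj D) O) :
  dend_hom D (Fobj O).
Proof.
refine (@DendHom _ _ D (Fobj O) (opsi h) (opsi_lin h) _ _).
- move=> al x y /=.
  by rewrite -ohom_T -[RHS](opsi_r h) /= tot_ract_pure.
- move=> al x y /=.
  by rewrite -ohom_T -[RHS](opsi_l h) /= tot_lact_pure.
Defined.

Section Psi.
Variables (D : dendf k Om) (O : ooperf k Om) (f : dend_hom D (Fobj O)).

Definition psiphi (x : tens Om (dcar D)) : acar (oalg O) :=
  \sum_(a <- tsupp x) @oT _ _ O a (f (x a)).

Lemma oT_lin al : klinear (@oT _ _ O al).
Proof. by case: (oopP O). Qed.

Lemma psiphiE (x : tens Om (dcar D)) (s : seq Om) :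
  uniq s -> (forall a, a \notin s -> x a = 0) ->
  psiphi x = \sum_(a <- s) @oT _ _ O a (f (x a)).
Proof.
move=> us hs; rewrite /psiphi (tsupp_sum (s := s)) //.
by move=> a ->; rewrite (klin0 (dh_lin f)) (klin0 (oT_lin a)).
Qed.

Lemma psiphi_lin : klinear psiphi.
Proof.
move=> c x y.
set s := undup (tsupp x ++ tsupp y ++ tsupp (c *: x + y)).
have us : uniq s by exact: undup_uniq.
have cov : forall z : tens Om (dcar D), {subset tsupp z <= s} ->
   forall a, a \notin s -> z a = 0.
  by move=> z sub a ha; apply: tsupp_cover; apply: contra ha; exact: sub.
rewrite (psiphiE us (cov _ _)); last by move=> a ha; rewrite mem_undup !mem_cat ha !orbT.
rewrite (psiphiE us (cov x _)); last by move=> a ha; rewrite mem_undup !mem_cat ha.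
rewrite (psiphiE us (cov y _)); last by move=> a ha; rewrite mem_undup !mem_cat ha !orbT.
rewrite scaler_sumr -big_split /=; apply: eq_bigr => a _.
by rewrite /= (dh_lin f) (oT_lin a).
Qed.

Lemma psiphi_pure v al : psiphi (tpure v al) = @oT _ _ O al (f v).
Proof.
by rewrite (@psiphiE _ [:: al]) //; [rewrite big_seq1 tpureE eqxx | exact: tpure_cover].
Qed.

Lemma psiphi_mul a b :
  psiphi (@amul _ (oalg (Gobj D)) a b) = @amul _ (oalg O) (psiphi a) (psiphi b).
Proof.
case: (oopP O) => [[Hm _] [Hl Hr] _ HT HO].
rewrite /= /tot_mul (klin_sum _ _ psiphi_lin).
rewrite [in RHS]/psiphi suml //; apply: eq_bigr => al _.
rewrite (klin_sum _ _ psiphi_lin).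
rewrite sumr //; apply: eq_bigr => be _.
rewrite psiphi_pure HO (klinD (dh_lin f)).
have -> : f (@dprec _ _ D be (a al) (b be)) = ract (f (a al)) (@oT _ _ O be (f (b be))).
  exact: (dh_prec f).
have -> : f (@dsucc _ _ D al (a al) (b be)) = lact (@oT _ _ O al (f (a al))) (f (b be)).
  exact: (dh_succ f).
by rewrite addrC.
Qed.

Lemma psi_l a u :
  f (@lact _ _ (omod (Gobj D)) a u) = @lact _ _ (omod O) (psiphi a) (f u).
Proof.
case: (oopP O) => [[Hm _] [Hl Hr] _ HT HO].
rewrite /= /tot_lact (klin_sum _ _ (dh_lin f)) /psiphi suml //.
apply: eq_bigr => al _; exact: (dh_succ f).
Qed.

Lemma psi_r u a :
  f (@ract _ _ (omod (Gobj D)) u a) = @ract _ _ (omod O) (f u) (psiphi a).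
Proof.
case: (oopP O) => [[Hm _] [Hl Hr] _ HT HO].
rewrite /= /tot_ract (klin_sum _ _ (dh_lin f)) /psiphi sumr //.
apply: eq_bigr => al _; exact: (dh_prec f).
Qed.

Definition PsiF : oop_hom (Gobj D) O :=
  @OopHom _ _ (Gobj D) O psiphi f psiphi_lin psiphi_mul (dh_lin f) psi_l psi_r
    (fun al u => psiphi_pure u al).
End Psi.

End Main.
Lemma oop_hom_eq (k : fieldType) (Om : semigroup) (O1 O2 : oop_data k Om) (h1 h2 : oop_hom O1 O2) :
  ophi h1 =1 ophi h2 -> opsi h1 =1 opsi h2 -> h1 = h2.
Proof.
case: h1 => p1 s1 a1 b1 c1 d1 e1 g1; case: h2 => p2 s2 a2 b2 c2 d2 e2 g2 /=.
move=> /funext E1 /funext E2; subst p2 s2; f_equal; apply: Prop_irrelevance.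
Qed.

Lemma dend_hom_eq (k : fieldType) (Om : semigroup) (D1 D2 : dend_data k Om) (h1 h2 : dend_hom D1 D2) :
  dh h1 =1 dh h2 -> h1 = h2.
Proof.
case: h1 => p1 a1 b1 c1; case: h2 => p2 a2 b2 c2 /=.
move=> /funext E1; subst p2; f_equal; apply: Prop_irrelevance.
Qed.

Lemma ophi_decomp (k : fieldType) (Om : semigroup) (D : dendf k Om) (O : ooperf k Om)
  (h : oop_hom (Gobj D) O) x :
  ophi h x = \sum_(a <- tsupp x) @oT _ _ O a (opsi h (x a)).
Proof.
rewrite {1}[x]tens_decomp (klin_sum _ _ (ophi_lin h)).
by apply: eq_bigr => a _; rewrite (ohom_T h).
Qed.

Theorem proposition2p17 (k : fieldType) (Om : semigroup) :
  exists Phi : forall (D : dendf k Om) (O : ooperf k Om),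
      oop_hom (Gobj D) O -> dend_hom D (Fobj O),
    (forall (D : dendf k Om) (O : ooperf k Om), bijective (Phi D O)) /\
    (forall (D D' : dendf k Om) (O O' : ooperf k Om)
            (f : dend_hom D' D) (g : oop_hom O O')
            (h : oop_hom (Gobj D) O) (h' : oop_hom (Gobj D') O'),
        (forall (x : tens Om (dcar D')) (y : tens Om (dcar D)),
            (forall a, y a = f (x a)) ->
            ophi h' x = ophi g (ophi h y)) ->
        (forall u, opsi h' u = opsi g (opsi h (f u))) ->
        forall u, Phi D' O' h' u = opsi g (Phi D O h (f u))).
Proof.
exists (@PhiF k Om); split; last first.
  by move=> D D' O O' f g h h' _ Hs u /=; rewrite Hs.
move=> D O; exists (@PsiF k Om D O).
- move=> h; apply: oop_hom_eq => x //=.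
  by rewrite ophi_decomp.
- by move=> f; apply: dend_hom_eq.
Qed.
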